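(* Let $\mathcal{C}$ be a $\beta$-avoiding simplicial complex that has an induced subcomplex isomorphic to $C_4$. Then the subcomplex of $\mathcal{C}$ induced on its non-ghost vertices is isomorphic to $\operatorname{cone}^p(C_4)$ for some $p\ge0$.
   Context: A simplicial complex on a finite ground set $V$ is a family of subsets of $V$ closed under subsets; a vertex $v\in V$ is a ghost vertex if $\{v\}\notin\mathcal{C}$, otherwise non-ghost. The induced subcomplex on $W\subseteq V$ is $\{F\in\mathcal{C}:F\subseteq W\}$ on $W$. $C_4$ is the complex on $\{1,2,3,4\}$ with facets $12,23,34,14$. $\operatorname{cone}^p(\mathcal{D})$ is the complex on the ground set of $\mathcal{D}$ together with $p$ new vertices $u_1,\dots,u_p$, with facets $F\cup\{u_1,\dots,u_p\}$ for $F$ a facet of $\mathcal{D}$ ($\operatorname{cone}^0(\mathcal{D})=\mathcal{D}$). For $S\subseteq V$, $\mathcal{C}\setminus S$ is the induced subcomplex on $V\setminus S$; for a face $R$, $\operatorname{link}_R(\mathcal{C})=\{F\setminus R: R\subseteq F\in\mathcal{C}\}$ on $V\setminus R$. A minor is $\operatorname{link}_R(\mathcal{C}\setminus S)$ with $S\cap R=\emptyset$, $R$ a face. $\mathcal{C}$ is $\beta$-avoiding if no minor is isomorphic to any of: $P_4$ (on $\{1,2,3,4\}$, facets $12,23,34$); $O_6$ (on $\{1,\dots,6\}$, faces the subsets containing none of $\{1,2\},\{3,4\},\{5,6\}$) or its Alexander dual $O_6^*$ (Alexander dual of $\mathcal{D}$ on $V$: $\{S\subseteq V: V\setminus S\notin\mathcal{D}\}$);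 $J_1$ (on $\{1,\dots,5\}$, facets $12,15,234,345$) or $J_1^*$ (facets $134,235,245$); $J_2$ (on $\{1,\dots,5\}$, facets $12,235,34,145$); $\partial\Delta_n\sqcup\{v\}$ for $n\ge1$ (all proper subsets of an $(n+1)$-set together with one extra isolated vertex). *)

(* Defs.v *)
From mathcomp Require Import all_boot.
Set Implicit Arguments. Unset Strict Implicit. Unset Printing Implicit Defensive.

Record complex (T : finType) := Complex { ground : {set T}; faces : {set {set T}} }.

Definition is_complex (T : finType) (C : complex T) : Prop :=
  (forall F, F \in faces C -> F \subset ground C) /\
  (forall F G : {set T}, F \in faces C -> G \subset F -> G \in faces C).

Definition induced (T : finType) (C : complex T) (W : {set T}) : complex T :=
  Complex W [set F in faces C | F \subset W].

Definition deletion (T : finType) (C : complex T) (S : {set T}) : complex T :=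
  induced C (ground C :\: S).

Definition link (T : finType) (C : complex T) (R : {set T}) : complex T :=
  Complex (ground C :\: R) [set F :\: R | F in faces C & R \subset F].

Definition is_minor (T : finType) (D C : complex T) : Prop :=
  exists S R : {set T}, [disjoint S & R] /\ R \in faces (deletion C S) /\
    D = link (deletion C S) R.

Definition iso (T1 T2 : finType) (C1 : complex T1) (C2 : complex T2) : Prop :=
  exists f : T1 -> T2, {in ground C1 &, injective f} /\ f @: ground C1 = ground C2 /\
    forall F : {set T1}, F \subset ground C1 -> (F \in faces C1) = (f @: F \in faces C2).

Definition alexander_dual (T : finType) (C : complex T) : complex T :=
  Complex (ground C) [set S : {set T} | (S \subset ground C) && ((ground C :\: S) \notin faces C)].

Definition gen_complex (n : nat) (facets : seq {set 'I_n}) : complex 'I_n :=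
  Complex setT [set F : {set 'I_n} | has (fun G : {set 'I_n} => F \subset G) facets].

Definition vx {n : nat} (i : nat) : 'I_n.+1 := inord i.

(* vertex k of the paper is vx (k-1) *)
Definition P4 : complex 'I_4 :=
  gen_complex [:: [set vx 0; vx 1]; [set vx 1; vx 2]; [set vx 2; vx 3]].
Definition C4 : complex 'I_4 :=
  gen_complex [:: [set vx 0; vx 1]; [set vx 1; vx 2]; [set vx 2; vx 3]; [set vx 0; vx 3]].
Definition O6 : complex 'I_6 :=
  Complex setT [set S : {set 'I_6} | [&& ~~ ([set vx 0; vx 1] \subset S),
                                         ~~ ([set vx 2; vx 3] \subset S) &
                                         ~~ ([set vx 4; vx 5] \subset S)]].
Definition O6dual : complex 'I_6 := alexander_dual O6.
Definition J1 : complex 'I_5 :=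
  gen_complex [:: [set vx 0; vx 1]; [set vx 0; vx 4]; [set vx 1; vx 2; vx 3];
                  [set vx 2; vx 3; vx 4]].
Definition J1dual : complex 'I_5 :=
  gen_complex [:: [set vx 0; vx 2; vx 3]; [set vx 1; vx 2; vx 4]; [set vx 1; vx 3; vx 4]].
Definition J2 : complex 'I_5 :=
  gen_complex [:: [set vx 0; vx 1]; [set vx 1; vx 2; vx 4]; [set vx 2; vx 3];
                  [set vx 0; vx 3; vx 4]].

(* boundary of the simplex on {0..n} plus isolated vertex n+1 *)
Definition bdry_plus (n : nat) : complex 'I_n.+2 :=
  let A := [set i : 'I_n.+2 | val i < n.+1] in
  Complex setT [set S : {set 'I_n.+2} | ((S \subset A) && (S != A)) || (S == [set ord_max])].

(* cone^p(C4): vertices 0..3 form C4, vertices 4..p+3 are the cone points *)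
Definition cone_C4 (p : nat) : complex 'I_p.+4 :=
  Complex setT [set S : {set 'I_p.+4} |
    has (fun e : nat * nat => [forall i in S, (val i < 4) ==> ((val i == e.1) || (val i == e.2))])
        [:: (0, 1); (1, 2); (2, 3); (0, 3)]].

Definition beta_avoiding (T : finType) (C : complex T) : Prop :=
  forall D : complex T, is_minor D C ->
    ~ iso D P4 /\ ~ iso D O6 /\ ~ iso D O6dual /\ ~ iso D J1 /\ ~ iso D J1dual /\
    ~ iso D J2 /\ (forall n, 0 < n -> ~ iso D (bdry_plus n)).

Definition nonghost (T : finType) (C : complex T) : {set T} :=
  [set v in ground C | [set v] \in faces C].

(* Main.v *)
Require Import Defs.
From mathcomp Require Import all_boot.
Set Implicit Arguments. Unset Strict Implicit. Unset Printing Implicit Defensive.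

Lemma iso_inv (T : finType) n (D : complex T) (K : complex 'I_n) (g : 'I_n -> T) (i0 : 'I_n) :
  ground K = setT -> injective g -> g @: setT = ground D ->
  (forall F : {set 'I_n}, (g @: F \in faces D) = (F \in faces K)) -> iso D K.
Proof.
move=> gK ig gD hF.
pose f t := odflt i0 [pick i | g i == t].
have fg i : f (g i) = i.
  rewrite /f; case: pickP => [j /eqP/ig -> //|/(_ i)]; by rewrite eqxx.
have gf t : t \in ground D -> g (f t) = t.
  rewrite -gD => /imsetP [i _ ->]; by rewrite fg.
exists f; split; first by move=> x y xD yD e; rewrite -(gf x) // -(gf y) // e.
split.
  rewrite gK; apply/setP => i; rewrite inE; apply/imsetP; exists (g i) => //.
  by rewrite -gD imset_f.
move=> F FD.
have e : F = g @: (f @: F).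
  apply/setP => t; apply/idP/imsetP => [tF|[i /imsetP [u uF ->] ->]].
    by exists (f t); [apply: imset_f | rewrite gf //; apply: (subsetP FD)].
  by rewrite gf //; apply: (subsetP FD).
by rewrite {1}e hF.
Qed.

Fixpoint all_bools (n : nat) : seq (seq bool) :=
  if n is n'.+1 then map (cons true) (all_bools n') ++ map (cons false) (all_bools n') else [:: [::]].

Lemma all_boolsP n bs : size bs = n -> bs \in all_bools n.
Proof.
elim: n bs => [|n IH] [|b bs] //= [/IH h].
rewrite mem_cat; apply/orP; case: b; [left|right]; by rewrite map_f.
Qed.

Definition bits n (F : {set 'I_n}) : seq bool := [seq i \in F | i <- enum 'I_n].

Lemma size_bits n (F : {set 'I_n}) : size (bits F) = n.
Proof. by rewrite size_map size_enum_ord. Qed.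

Lemma nth_bits n (F : {set 'I_n}) (i : 'I_n) : nth false (bits F) i = (i \in F).
Proof. by rewrite (nth_map i) ?size_enum_ord // nth_ord_enum. Qed.

Definition sl n (l : seq nat) : {set 'I_n} := [set i : 'I_n | val i \in l].

Lemma sub_sl n (F : {set 'I_n}) l :
  (F \subset sl n l) = all (fun k => nth false (bits F) k ==> (k \in l)) (iota 0 n).
Proof.
apply/subsetP/allP => [h k|h i iF].
  rewrite mem_iota add0n => /andP [_ kn].
  rewrite -[k]/(val (Ordinal kn)) nth_bits; apply/implyP => /h; by rewrite inE.
rewrite inE; have := h i; rewrite mem_iota add0n ltn_ord nth_bits iF; by move/(_ isT).
Qed.

Lemma sl_sub n (F : {set 'I_n}) l : all (fun k => k < n) l ->
  (sl n l \subset F) = all (nth false (bits F)) l.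
Proof.
move=> /allP ln; apply/subsetP/allP => [h k kl|h i].
  have kn := ln k kl; rewrite -[k]/(val (Ordinal kn)) nth_bits; apply: h; by rewrite inE.
rewrite inE => /h; by rewrite nth_bits.
Qed.

Lemma vx_eq n (i : 'I_n.+1) k : k <= n -> (i == vx k) = (val i == k).
Proof. move=> kn; rewrite /vx -val_eqE /= inordK //. Qed.

Definition checkb n (p : seq bool -> bool) (fs ns : seq (seq nat)) :=
  all (all (fun k => k < n)) fs && all (all (fun k => k < n)) ns &&
  all (fun bs => if p bs then has (fun l => all (fun k => nth false bs k ==> (k \in l)) (iota 0 n)) fs
                 else has (fun l => all (nth false bs) l) ns) (all_bools n).

Lemma imset_sl (T : finType) n (s : seq T) x0 l : size s = n -> all (fun k => k < n) l ->
  (fun i : 'I_n => nth x0 s i) @: sl n l = [set x in map (nth x0 s) l].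
Proof.
move=> sn /allP ln; apply/setP => x; rewrite inE; apply/imsetP/mapP => [[i] |[k kl ->]].
  by rewrite inE => il ->; exists (val i).
by have kn := ln k kl; exists (Ordinal kn); rewrite // inE.
Qed.

Lemma iso_pattern (T : finType) n (D : complex T) (K : complex 'I_n) (p : seq bool -> bool) fs ns
  (s : seq T) (x0 : T) (i0 : 'I_n) :
  ground K = setT -> (forall F, (F \in faces K) = p (bits F)) -> checkb n p fs ns ->
  (forall F G : {set T}, F \subset ground D -> G \subset F -> F \in faces D -> G \in faces D) ->
  uniq s -> size s = n -> [set x in s] = ground D ->
  all (fun l => [set x in map (nth x0 s) l] \in faces D) fs ->
  all (fun l => [set x in map (nth x0 s) l] \notin faces D) ns -> iso D K.
Proof.
move=> gK hK /andP [/andP [/allP fsn /allP nsn] /allP ch] clD us sn sD /allP hfs /allP hns.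
have ig : injective (fun i : 'I_n => nth x0 s i).
  move=> i j /eqP; rewrite nth_uniq ?sn // => /eqP; exact: val_inj.
have gs : (fun i : 'I_n => nth x0 s i) @: setT = [set x in s].
  apply/setP => x; rewrite inE; apply/imsetP/idP => [[i _ ->]|xs].
    by rewrite mem_nth ?sn.
  have xn : index x s < n by rewrite -sn index_mem.
  by exists (Ordinal xn); rewrite //= nth_index.
apply: (iso_inv i0 gK ig) => [|F]; first by rewrite -sD -gs.
rewrite hK; have := ch _ (all_boolsP (size_bits F)).
have subD : forall l, all (fun k => k < n) l -> [set x in map (nth x0 s) l] \subset ground D.
  move=> l /allP ln; rewrite -sD; apply/subsetP => x; rewrite !inE => /mapP [k kl ->].
  by rewrite mem_nth // sn ln.
case: (p (bits F)) => /hasP [l ll].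
  rewrite -sub_sl => Fl; apply: (clD _ _ (subD l (fsn l ll))) (hfs l ll).
  by rewrite -(imset_sl x0 sn (fsn l ll)); apply: imsetS.
rewrite -sl_sub ?nsn // => lF; apply/negP => h; move: (hns l ll); rewrite -(imset_sl x0 sn (nsn l ll)).
apply/negP/negPn; apply: (clD _ _ _ _ h); [rewrite -sD -gs; exact: imsetS|exact: imsetS].
Qed.

Definition minor_on (T : finType) (C : complex T) (R X : {set T}) :=
  link (deletion C (ground C :\: (X :|: R))) R.

Section Minor.
Variables (T : finType) (C : complex T) (R X : {set T}).
Hypotheses (hC : is_complex C) (RC : R \in faces C) (XC : X \subset ground C) (XR : [disjoint X & R]).

Lemma minor_onP : is_minor (minor_on C R X) C.
Proof.
exists (ground C :\: (X :|: R)), R; split.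
  rewrite disjoints_subset; apply/subsetP => x; rewrite !inE; by case: (x \in R); rewrite ?orbT.
split=> //; rewrite /deletion /induced inE RC /=.
apply/subsetP => x xR; rewrite !inE xR orbT /=.
by apply: (subsetP (hC.1 _ RC)).
Qed.

Lemma ground_minor_on : ground (minor_on C R X) = X.
Proof.
apply/setP => x; rewrite /= !inE.
case xX: (x \in X); last by case: (x \in R); case: (x \in ground C).
have xR : x \notin R by rewrite (disjointFr XR xX).
by rewrite xR (subsetP XC).
Qed.

Lemma faces_minor_on (G : {set T}) : G \subset X -> (G \in faces (minor_on C R X)) = (G :|: R \in faces C).
Proof.
move=> GX; apply/imsetP/idP => [[F]|GR].
  rewrite inE => /andP [] /= ; rewrite inE => /andP [FC _] RF ->.
  suff -> : F :\: R :|: R = F by [].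
  apply/setP => x; rewrite !inE; case xR: (x \in R) => //=; rewrite ?orbF ?orbT //.
  by rewrite (subsetP RF).
exists (G :|: R).
  rewrite inE /= inE GR /= subsetUr andbT.

  apply/subsetP => x xGR; rewrite !inE (subsetP (hC.1 _ GR)) // andbT.
  by move: xGR; rewrite inE => /orP [/(subsetP GX) -> | ->]; rewrite ?orbT.
apply/setP => x; rewrite !inE; case xR: (x \in R); rewrite /= ?orbF ?andbT //.
apply/negbTE; apply/negP => xG; move: (disjointFr XR (subsetP GX _ xG)); by rewrite xR.
Qed.
End Minor.

Lemma no_pattern (T : finType) (C : complex T) n (K : complex 'I_n) p fs ns (s : seq T) (x0 : T) (i0 : 'I_n) R :
  ground K = setT -> (forall F, (F \in faces K) = p (bits F)) -> checkb n p fs ns ->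
  is_complex C -> (forall D, is_minor D C -> ~ iso D K) -> R \in faces C ->
  uniq s -> size s = n -> all (fun x => x \in ground C) s -> all (fun x => x \notin R) s ->
  all (fun l => [set x in map (nth x0 s) l] :|: R \in faces C) fs ->
  all (fun l => [set x in map (nth x0 s) l] :|: R \notin faces C) ns -> False.
Proof.
move=> gK hK ch hC nK RC us sn /allP sg /allP sR /allP hfs /allP hns.
have XC : [set x in s] \subset ground C by apply/subsetP => x; rewrite inE => /sg.
have XR : [disjoint [set x in s] & R].
  rewrite disjoint_sym disjoints_subset; apply/subsetP => x xR; rewrite !inE.
  by apply/negP => /sR; rewrite xR.
have h := nK _ (@minor_onP _ C R [set x in s] hC RC); apply: h.
have subX l : all (fun k => k < n) l -> [set x in map (nth x0 s) l] \subset [set x in s].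
  move=> /allP ln; apply/subsetP => x; rewrite !inE => /mapP [k kl ->].
  by rewrite mem_nth // sn ln.
case/andP: (ch) => /andP [/allP fsn /allP nsn] _.
apply: (@iso_pattern T n _ K p fs ns s x0 i0 gK hK ch).
- move=> F G; rewrite ground_minor_on // => FX GF.
  rewrite !faces_minor_on //; last by apply: subset_trans GF FX.
  move=> h; apply: (proj2 hC _ _ h); exact: setSU.
- by [].
- by [].
- by rewrite ground_minor_on.
- apply/allP => l ll; rewrite faces_minor_on //; [exact: hfs | exact: subX (fsn l ll)].
- apply/allP => l ll; rewrite faces_minor_on //; [exact: hns | exact: subX (nsn l ll)].
Qed.

Lemma set2_sl n i j : i <= n -> j <= n -> [set vx i; vx j] = sl n.+1 [:: i; j].
Proof. move=> hi hj; apply/setP => x; by rewrite !inE !vx_eq. Qed.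
Lemma set3_sl n i j k : i <= n -> j <= n -> k <= n -> [set vx i; vx j; vx k] = sl n.+1 [:: i; j; k].
Proof. move=> hi hj hk; apply/setP => x; by rewrite !inE !vx_eq // orbA. Qed.

Definition subl n (bs : seq bool) (l : seq nat) := all (fun k => nth false bs k ==> (k \in l)) (iota 0 n).

Definition pP4 bs := has (subl 4 bs) [:: [::0;1];[::1;2];[::2;3]].
Lemma fP4 F : (F \in faces P4) = pP4 (bits F).
Proof. by rewrite inE /= !set2_sl // !sub_sl. Qed.
Lemma cP4 : checkb 4 pP4 [:: [::0;1];[::1;2];[::2;3]] [:: [::0;2];[::1;3];[::0;3]].
Proof. by vm_compute. Qed.

Definition pJ1 bs := has (subl 5 bs) [:: [::0;1];[::0;4];[::1;2;3];[::2;3;4]].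
Lemma fJ1 F : (F \in faces J1) = pJ1 (bits F).
Proof. by rewrite inE /= !set3_sl // !set2_sl // !sub_sl. Qed.
Lemma cJ1 : checkb 5 pJ1 [:: [::0;1];[::0;4];[::1;2;3];[::2;3;4]] [:: [::0;2];[::0;3];[::1;4]].
Proof. by vm_compute. Qed.

Definition pJ2 bs := has (subl 5 bs) [:: [::0;1];[::1;2;4];[::2;3];[::0;3;4]].
Lemma fJ2 F : (F \in faces J2) = pJ2 (bits F).
Proof. by rewrite inE /= !set3_sl // !set2_sl // !sub_sl. Qed.
Lemma cJ2 : checkb 5 pJ2 [:: [::0;1];[::1;2;4];[::2;3];[::0;3;4]] [:: [::0;2];[::1;3];[::0;1;4];[::2;3;4]].
Proof. by vm_compute. Qed.

Definition pO6 bs := [&& ~~ all (nth false bs) [::0;1], ~~ all (nth false bs) [::2;3] & ~~ all (nth false bs) [::4;5]].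
Lemma fO6 F : (F \in faces O6) = pO6 (bits F).
Proof. by rewrite inE /= !set2_sl // !sl_sub. Qed.
Lemma cO6 : checkb 6 pO6 [:: [::0;2;4];[::0;2;5];[::0;3;4];[::0;3;5];[::1;2;4];[::1;2;5];[::1;3;4];[::1;3;5]] [:: [::0;1];[::2;3];[::4;5]].
Proof. by vm_compute. Qed.

Definition pB1 bs := (subl 3 bs [::0;1] && ~~ (subl 3 bs [::0;1] && all (nth false bs) [::0;1]))
   || (subl 3 bs [::2] && all (nth false bs) [::2]).
Lemma fB1 F : (F \in faces (bdry_plus 1)) = pB1 (bits F).
Proof.
have eA : [set i : 'I_3 | val i < 2] = sl 3 [::0;1].
  by apply/setP => -[[|[|[|k]]] kl] //; rewrite !inE.
have eM : [set (ord_max : 'I_3)] = sl 3 [::2].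
  by apply/setP => -[[|[|[|k]]] kl] //; rewrite !inE.
rewrite inE /= eA eM !eqEsubset !sub_sl !sl_sub //.
Qed.
Lemma cB1 : checkb 3 pB1 [:: [::0];[::1];[::2]] [:: [::0;1];[::1;2];[::0;2]].
Proof. by vm_compute. Qed.

Section Local.
Variables (T : finType) (C : complex T).
Hypothesis hC : is_complex C.
Hypothesis nP4 : forall D, is_minor D C -> ~ iso D P4.
Hypothesis nO6 : forall D, is_minor D C -> ~ iso D O6.
Hypothesis nJ1 : forall D, is_minor D C -> ~ iso D J1.
Hypothesis nJ2 : forall D, is_minor D C -> ~ iso D J2.
Hypothesis nB1 : forall D, is_minor D C -> ~ iso D (bdry_plus 1).

Definition Fc (R : {set T}) (l : seq T) := [set x in l] :|: R \in faces C.

Lemma Fc_sub R l R' l' : ([set x in l] :|: R) \subset ([set x in l'] :|: R') -> Fc R' l' -> Fc R l.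
Proof. move=> s h; exact: (proj2 hC _ _ h s). Qed.

Lemma Fc_perm R l l' : {subset l <= l'} -> Fc R l' -> Fc R l.
Proof.
move=> s; apply: Fc_sub; apply/subsetP => x; rewrite !inE => /orP [/s -> //|->]; by rewrite orbT.
Qed.

Lemma Fc_nsub R l l' : {subset l' <= l} -> ~~ Fc R l' -> ~~ Fc R l.
Proof. move=> s; apply: contra; exact: Fc_perm. Qed.

Lemma FcU x R l : Fc (x |: R) l = Fc R (x :: l).
Proof.
have e : [set y in l] :|: (x |: R) = [set y in x :: l] :|: R.
  apply/setP => y; rewrite !inE.
  by case: (y == x); case: (y \in l); case: (y \in R).
by rewrite /Fc e.
Qed.

Lemma Fc_ground R l x : Fc R l -> x \in l -> x \in ground C.
Proof. move=> h xl; apply: (subsetP (proj1 hC _ h)); by rewrite !inE xl. Qed.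

Lemma Fc_R R l : Fc R l -> R \in faces C.
Proof. move=> h; apply: (proj2 hC _ _ h); exact: subsetUr. Qed.

Lemma noP4 R (s : seq T) x0 : R \in faces C -> uniq s -> size s = 4 ->
  all (fun x => x \in ground C) s -> all (fun x => x \notin R) s ->
  all (fun l => Fc R (map (nth x0 s) l)) [:: [::0;1];[::1;2];[::2;3]] ->
  all (fun l => ~~ Fc R (map (nth x0 s) l)) [:: [::0;2];[::1;3];[::0;3]] -> False.
Proof. move=> RC us sn sg sR; exact: (no_pattern ord0 _ fP4 cP4 hC nP4 RC us sn sg sR). Qed.

Lemma noB1 R (s : seq T) x0 : R \in faces C -> uniq s -> size s = 3 ->
  all (fun x => x \in ground C) s -> all (fun x => x \notin R) s ->
  all (fun l => Fc R (map (nth x0 s) l)) [:: [::0];[::1];[::2]] ->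
  all (fun l => ~~ Fc R (map (nth x0 s) l)) [:: [::0;1];[::1;2];[::0;2]] -> False.
Proof. move=> RC us sn sg sR; exact: (no_pattern ord0 _ fB1 cB1 hC nB1 RC us sn sg sR). Qed.

Lemma noJ1 R (s : seq T) x0 : R \in faces C -> uniq s -> size s = 5 ->
  all (fun x => x \in ground C) s -> all (fun x => x \notin R) s ->
  all (fun l => Fc R (map (nth x0 s) l)) [:: [::0;1];[::0;4];[::1;2;3];[::2;3;4]] ->
  all (fun l => ~~ Fc R (map (nth x0 s) l)) [:: [::0;2];[::0;3];[::1;4]] -> False.
Proof. move=> RC us sn sg sR; exact: (no_pattern ord0 _ fJ1 cJ1 hC nJ1 RC us sn sg sR). Qed.

Lemma noJ2 R (s : seq T) x0 : R \in faces C -> uniq s -> size s = 5 ->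
  all (fun x => x \in ground C) s -> all (fun x => x \notin R) s ->
  all (fun l => Fc R (map (nth x0 s) l)) [:: [::0;1];[::1;2;4];[::2;3];[::0;3;4]] ->
  all (fun l => ~~ Fc R (map (nth x0 s) l)) [:: [::0;2];[::1;3];[::0;1;4];[::2;3;4]] -> False.
Proof. move=> RC us sn sg sR; exact: (no_pattern ord0 _ fJ2 cJ2 hC nJ2 RC us sn sg sR). Qed.

Lemma noO6 R (s : seq T) x0 : R \in faces C -> uniq s -> size s = 6 ->
  all (fun x => x \in ground C) s -> all (fun x => x \notin R) s ->
  all (fun l => Fc R (map (nth x0 s) l)) [:: [::0;2;4];[::0;2;5];[::0;3;4];[::0;3;5];[::1;2;4];[::1;2;5];[::1;3;4];[::1;3;5]] ->
  all (fun l => ~~ Fc R (map (nth x0 s) l)) [:: [::0;1];[::2;3];[::4;5]] -> False.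
Proof. move=> RC us sn sg sR; exact: (no_pattern ord0 _ fO6 cO6 hC nO6 RC us sn sg sR). Qed.

End Local.

Ltac neq := repeat match goal with
 | H : is_true (?x != ?y) |- context [?x == ?y] => rewrite (negbTE H)
 | H : is_true (?x != ?y) |- context [?y == ?x] => rewrite [y == x]eq_sym (negbTE H)
 | H : is_true (?x \notin ?R) |- context [?x \in ?R] => rewrite (negbTE H)
 end.

Ltac subl := let x := fresh "x" in let H := fresh "H" in
  move=> x; rewrite !inE => H;
  repeat (case/orP: H => [/eqP -> | H]; [by rewrite ?eqxx ?orbT|]);
  move/eqP: H => ->; by rewrite ?eqxx ?orbT.

Ltac fc_auto := match goal with
 | hC : is_complex ?C, H : is_true (Fc ?C ?R _) |- is_true (Fc ?C ?R _) => apply: (Fc_perm hC _ H); subl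
 | hC : is_complex ?C, H : is_true (~~ Fc ?C ?R _) |- is_true (~~ Fc ?C ?R _) => apply: (Fc_nsub hC _ H); subl
 end.

Ltac side := rewrite /= ?FcU; repeat (apply/andP; split); rewrite ?inE; neq; try done; try fc_auto.

Section Cfg.
Variables (T : finType) (C : complex T).
Definition cfg (R : {set T}) (a b c d v : T) : Prop :=
  [/\ uniq [:: a;b;c;d;v], all (fun x => x \notin R) [:: a;b;c;d;v],
      [/\ Fc C R [::a;b], Fc C R [::b;c], Fc C R [::c;d] & Fc C R [::d;a]],
      ~~ Fc C R [::a;c] /\ ~~ Fc C R [::b;d] & Fc C R [::v]].
End Cfg.

Ltac unpack H := case: H; rewrite /= !inE !negb_or.

Section Step.
Variables (T : finType) (C : complex T).
Hypothesis hC : is_complex C.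
Hypothesis nP4 : forall D, is_minor D C -> ~ iso D P4.
Hypothesis nO6 : forall D, is_minor D C -> ~ iso D O6.
Hypothesis nJ1 : forall D, is_minor D C -> ~ iso D J1.
Hypothesis nJ2 : forall D, is_minor D C -> ~ iso D J2.
Hypothesis nB1 : forall D, is_minor D C -> ~ iso D (bdry_plus 1).

Lemma cfg_rot R a b c d v : cfg C R a b c d v -> cfg C R b c d a v.
Proof.
move=> H; unpack H => /and5P [/and4P [ab ac ad av] /and3P [bc bd bv] /andP [cd cv] dv _] /and5P [aR bR cR dR /andP [vR _]] [eab ebc ecd eda] [nac nbd] vv.
have RC := Fc_R hC vv.
have ag : a \in ground C by apply: (Fc_ground hC eab); rewrite !inE eqxx.
have bg : b \in ground C by apply: (Fc_ground hC eab); rewrite !inE eqxx ?orbT.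
have cg : c \in ground C by apply: (Fc_ground hC ecd); rewrite !inE eqxx.
have dg : d \in ground C by apply: (Fc_ground hC ecd); rewrite !inE eqxx ?orbT.
have vg : v \in ground C by apply: (Fc_ground hC vv); rewrite !inE eqxx.
by split; try split; side.
Qed.

Lemma cfg_refl R a b c d v : cfg C R a b c d v -> cfg C R a d c b v.
Proof.
move=> H; unpack H => /and5P [/and4P [ab ac ad av] /and3P [bc bd bv] /andP [cd cv] dv _] /and5P [aR bR cR dR /andP [vR _]] [eab ebc ecd eda] [nac nbd] vv.
have RC := Fc_R hC vv.
have ag : a \in ground C by apply: (Fc_ground hC eab); rewrite !inE eqxx.
have bg : b \in ground C by apply: (Fc_ground hC eab); rewrite !inE eqxx ?orbT.
have cg : c \in ground C by apply: (Fc_ground hC ecd); rewrite !inE eqxx.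
have dg : d \in ground C by apply: (Fc_ground hC ecd); rewrite !inE eqxx ?orbT.
have vg : v \in ground C by apply: (Fc_ground hC vv); rewrite !inE eqxx.
by split; try split; side.
Qed.


Lemma L1 R a b c d v : cfg C R a b c d v -> Fc C R [:: v; a] || Fc C R [:: v; c].
Proof.
move=> H; unpack H => /and5P [/and4P [ab ac ad av] /and3P [bc bd bv] /andP [cd cv] dv _] /and5P [aR bR cR dR /andP [vR _]] [eab ebc ecd eda] [nac nbd] vv.
have RC := Fc_R hC vv.
have ag : a \in ground C by apply: (Fc_ground hC eab); rewrite !inE eqxx.
have bg : b \in ground C by apply: (Fc_ground hC eab); rewrite !inE eqxx ?orbT.
have cg : c \in ground C by apply: (Fc_ground hC ecd); rewrite !inE eqxx.
have dg : d \in ground C by apply: (Fc_ground hC ecd); rewrite !inE eqxx ?orbT.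
have vg : v \in ground C by apply: (Fc_ground hC vv); rewrite !inE eqxx.

apply/negPn/negP; rewrite negb_or => /andP [na nc].
by apply: (noB1 hC nB1 (s := [:: v; a; c]) (x0 := v) RC); side.
Qed.

Lemma L2 R a b c d v : cfg C R a b c d v -> Fc C R [:: v; a] -> ~~ Fc C R [:: v; c] -> ~~ Fc C R [:: v; d] -> False.
Proof.
move=> H; unpack H => /and5P [/and4P [ab ac ad av] /and3P [bc bd bv] /andP [cd cv] dv _] /and5P [aR bR cR dR /andP [vR _]] [eab ebc ecd eda] [nac nbd] vv.
have RC := Fc_R hC vv.
have ag : a \in ground C by apply: (Fc_ground hC eab); rewrite !inE eqxx.
have bg : b \in ground C by apply: (Fc_ground hC eab); rewrite !inE eqxx ?orbT.
have cg : c \in ground C by apply: (Fc_ground hC ecd); rewrite !inE eqxx.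
have dg : d \in ground C by apply: (Fc_ground hC ecd); rewrite !inE eqxx ?orbT.
have vg : v \in ground C by apply: (Fc_ground hC vv); rewrite !inE eqxx.

move=> na nc nd.
by apply: (noP4 hC nP4 (s := [:: c; d; a; v]) (x0 := v) RC); side.
Qed.

Lemma L3 R a b c d v : cfg C R a b c d v -> Fc C R [:: v; b] -> ~~ Fc C R [:: v; a] -> Fc C R [:: v; b; c].
Proof.
move=> H; unpack H => /and5P [/and4P [ab ac ad av] /and3P [bc bd bv] /andP [cd cv] dv _] /and5P [aR bR cR dR /andP [vR _]] [eab ebc ecd eda] [nac nbd] vv.
have RC := Fc_R hC vv.
have ag : a \in ground C by apply: (Fc_ground hC eab); rewrite !inE eqxx.
have bg : b \in ground C by apply: (Fc_ground hC eab); rewrite !inE eqxx ?orbT.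
have cg : c \in ground C by apply: (Fc_ground hC ecd); rewrite !inE eqxx.
have dg : d \in ground C by apply: (Fc_ground hC ecd); rewrite !inE eqxx ?orbT.
have vg : v \in ground C by apply: (Fc_ground hC vv); rewrite !inE eqxx.

move=> nb na; apply/negPn/negP => nt.
have : Fc C (b |: R) [:: c] by rewrite FcU; fc_auto.
move/(Fc_R hC) => RC'.
by apply: (noB1 hC nB1 (s := [:: c; a; v]) (x0 := v) RC'); side.
Qed.

Lemma L4 R a b c d v : cfg C R a b c d v -> ~~ Fc C R [:: v; a] -> Fc C R [:: v; b; c] -> Fc C R [:: v; c; d] -> False.
Proof.
move=> H; unpack H => /and5P [/and4P [ab ac ad av] /and3P [bc bd bv] /andP [cd cv] dv _] /and5P [aR bR cR dR /andP [vR _]] [eab ebc ecd eda] [nac nbd] vv.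
have RC := Fc_R hC vv.
have ag : a \in ground C by apply: (Fc_ground hC eab); rewrite !inE eqxx.
have bg : b \in ground C by apply: (Fc_ground hC eab); rewrite !inE eqxx ?orbT.
have cg : c \in ground C by apply: (Fc_ground hC ecd); rewrite !inE eqxx.
have dg : d \in ground C by apply: (Fc_ground hC ecd); rewrite !inE eqxx ?orbT.
have vg : v \in ground C by apply: (Fc_ground hC vv); rewrite !inE eqxx.

move=> na t1 t2.
by apply: (noJ1 hC nJ1 (s := [:: a; b; c; v; d]) (x0 := v) RC); side.
Qed.

Lemma L5 R a b c d v : cfg C R a b c d v -> Fc C R [:: v; a] -> Fc C R [:: v; b] -> Fc C R [:: v; c] ->
  ~~ Fc C R [:: v; a; b] -> ~~ Fc C R [:: v; b; c] -> False.
Proof.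
move=> H; unpack H => /and5P [/and4P [ab ac ad av] /and3P [bc bd bv] /andP [cd cv] dv _] /and5P [aR bR cR dR /andP [vR _]] [eab ebc ecd eda] [nac nbd] vv.
have RC := Fc_R hC vv.
have ag : a \in ground C by apply: (Fc_ground hC eab); rewrite !inE eqxx.
have bg : b \in ground C by apply: (Fc_ground hC eab); rewrite !inE eqxx ?orbT.
have cg : c \in ground C by apply: (Fc_ground hC ecd); rewrite !inE eqxx.
have dg : d \in ground C by apply: (Fc_ground hC ecd); rewrite !inE eqxx ?orbT.
have vg : v \in ground C by apply: (Fc_ground hC vv); rewrite !inE eqxx.

move=> na nb nc t1 t2.
have : Fc C (v |: R) [:: a] by rewrite FcU; fc_auto.
move/(Fc_R hC) => RC'.
by apply: (noB1 hC nB1 (s := [:: a; b; c]) (x0 := v) RC'); side.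
Qed.

Lemma L6 R a b c d v : cfg C R a b c d v -> ~~ Fc C R [:: v; d; a] -> Fc C R [:: v; a; b] ->
  Fc C R [:: v; b; c] -> Fc C R [:: v; c; d] -> False.
Proof.
move=> H; unpack H => /and5P [/and4P [ab ac ad av] /and3P [bc bd bv] /andP [cd cv] dv _] /and5P [aR bR cR dR /andP [vR _]] [eab ebc ecd eda] [nac nbd] vv.
have RC := Fc_R hC vv.
have ag : a \in ground C by apply: (Fc_ground hC eab); rewrite !inE eqxx.
have bg : b \in ground C by apply: (Fc_ground hC eab); rewrite !inE eqxx ?orbT.
have cg : c \in ground C by apply: (Fc_ground hC ecd); rewrite !inE eqxx.
have dg : d \in ground C by apply: (Fc_ground hC ecd); rewrite !inE eqxx ?orbT.
have vg : v \in ground C by apply: (Fc_ground hC vv); rewrite !inE eqxx.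

move=> t0 t1 t2 t3.
have : Fc C (v |: R) [:: a] by rewrite FcU; fc_auto.
move/(Fc_R hC) => RC'.
by apply: (noP4 hC nP4 (s := [:: a; b; c; d]) (x0 := v) RC'); side.
Qed.

Lemma L7 R a b c d v : cfg C R a b c d v -> ~~ Fc C R [:: v; b; c] -> ~~ Fc C R [:: v; d; a] ->
  Fc C R [:: v; a; b] -> Fc C R [:: v; c; d] -> False.
Proof.
move=> H; unpack H => /and5P [/and4P [ab ac ad av] /and3P [bc bd bv] /andP [cd cv] dv _] /and5P [aR bR cR dR /andP [vR _]] [eab ebc ecd eda] [nac nbd] vv.
have RC := Fc_R hC vv.
have ag : a \in ground C by apply: (Fc_ground hC eab); rewrite !inE eqxx.
have bg : b \in ground C by apply: (Fc_ground hC eab); rewrite !inE eqxx ?orbT.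
have cg : c \in ground C by apply: (Fc_ground hC ecd); rewrite !inE eqxx.
have dg : d \in ground C by apply: (Fc_ground hC ecd); rewrite !inE eqxx ?orbT.
have vg : v \in ground C by apply: (Fc_ground hC vv); rewrite !inE eqxx.

move=> t0 t1 t2 t3.
by apply: (noJ2 hC nJ2 (s := [:: c; b; a; d; v]) (x0 := v) RC); side.
Qed.

Lemma nall R a b c d v : cfg C R a b c d v -> Fc C R [:: v; a].
Proof.
move=> H; apply/negPn/negP => na.
have H2 := cfg_rot (cfg_rot H).
have nc : Fc C R [:: v; c] by move: (L1 H); rewrite (negbTE na).
have nb : Fc C R [:: v; b].
  apply/negPn/negP => nb; exact: (L2 H2 nc na nb).
have nd : Fc C R [:: v; d].
  apply/negPn/negP => nd; exact: (L2 (cfg_refl H2) nc na nd).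
have t1 := L3 H nb na.
have t2 := L3 (cfg_refl H) nd na.
apply: (L4 H na t1); apply: (Fc_perm hC _ t2); subl.
Qed.

Lemma stepA R a b c d v : cfg C R a b c d v -> Fc C R [:: v; a; b].
Proof.
move=> H.
have H1 := cfg_rot H. have H2 := cfg_rot H1. have H3 := cfg_rot H2.
have na := nall H. have nb := nall H1. have nc := nall H2. have nd := nall H3.
apply/negPn/negP => t.
have tbc : Fc C R [:: v; b; c] by apply/negPn/negP; exact: (L5 H na nb nc t).
have tda : Fc C R [:: v; d; a] by apply/negPn/negP => t'; exact: (L5 H3 nd na nb t' t).
case tcd: (Fc C R [:: v; c; d]).
  exact: (L6 H1 t tbc tcd tda).
exact: (L7 H1 (negbT tcd) t tbc tda).
Qed.

Lemma stepO6 R a b c d v w : cfg C R a b c d v -> w \notin [:: a; b; c; d; v] -> w \notin R ->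
  Fc C R [:: w; a; b] -> Fc C R [:: w; b; c] -> Fc C R [:: w; c; d] -> Fc C R [:: w; d; a] ->
  Fc C R [:: v; w].
Proof.
move=> H; have H1 := cfg_rot H. have H2 := cfg_rot H1. have H3 := cfg_rot H2.
have u1 := stepA H. have u2 := stepA H1. have u3 := stepA H2. have u4 := stepA H3.
unpack H => /and5P [/and4P [ab ac ad av] /and3P [bc bd bv] /andP [cd cv] dv _] /and5P [aR bR cR dR /andP [vR _]] [eab ebc ecd eda] [nac nbd] vv.
have RC := Fc_R hC vv.
have ag : a \in ground C by apply: (Fc_ground hC eab); rewrite !inE eqxx.
have bg : b \in ground C by apply: (Fc_ground hC eab); rewrite !inE eqxx ?orbT.
have cg : c \in ground C by apply: (Fc_ground hC ecd); rewrite !inE eqxx.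
have dg : d \in ground C by apply: (Fc_ground hC ecd); rewrite !inE eqxx ?orbT.
have vg : v \in ground C by apply: (Fc_ground hC vv); rewrite !inE eqxx.

move=> wn wR w1 w2 w3 w4.
move: wn => /and5P [wa wb wc wd wv].
have wg : w \in ground C by apply: (Fc_ground hC w1); rewrite !inE eqxx.
apply/negPn/negP => nuw.
by apply: (noO6 hC nO6 (s := [:: a; c; b; d; v; w]) (x0 := v) RC); side.
Qed.

End Step.

Section Main.
Variables (T : finType) (C : complex T).
Hypothesis hC : is_complex C.
Hypothesis nP4 : forall D, is_minor D C -> ~ iso D P4.
Hypothesis nO6 : forall D, is_minor D C -> ~ iso D O6.
Hypothesis nJ1 : forall D, is_minor D C -> ~ iso D J1.
Hypothesis nJ2 : forall D, is_minor D C -> ~ iso D J2.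
Hypothesis nB1 : forall D, is_minor D C -> ~ iso D (bdry_plus 1).
Variables a b c d : T.
Hypothesis abcd : uniq [:: a; b; c; d].
Hypotheses (e1 : Fc C set0 [:: a; b]) (e2 : Fc C set0 [:: b; c]) (e3 : Fc C set0 [:: c; d]) (e4 : Fc C set0 [:: d; a]).
Hypotheses (n1 : ~~ Fc C set0 [:: a; c]) (n2 : ~~ Fc C set0 [:: b; d]).

Definition Ub := nonghost C :\: [set a; b; c; d].
Definition PP (G : {set T}) := [/\ Fc C G [:: a; b], Fc C G [:: b; c], Fc C G [:: c; d] & Fc C G [:: d; a]].

Lemma Ub_notin (G : {set T}) x : G \subset Ub -> x \in [:: a; b; c; d] -> x \notin G.
Proof.
move=> GU xl; apply/negP => /(subsetP GU); rewrite /Ub inE => /andP [h _]; move: h; rewrite !inE.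
move: xl; rewrite !inE; by do ! case: (_ == _).
Qed.

Lemma Ub_nin x : x \in Ub -> x \notin [:: a; b; c; d].
Proof. rewrite /Ub inE => /andP [h _]; move: h; rewrite !inE; by do ! case: (_ == _). Qed.

Lemma diag0 (G : {set T}) l : ~~ Fc C set0 l -> ~~ Fc C G l.
Proof.
apply: contra; apply: (Fc_sub hC); rewrite setU0; exact: subsetUl.
Qed.

Lemma mk_cfg (G : {set T}) v : G \subset Ub -> v \in Ub -> v \notin G -> PP G -> Fc C G [:: v] -> cfg C G a b c d v.
Proof.
move=> GU vU vG [f1 f2 f3 f4] fv; split => //.
- move: (Ub_nin vU) abcd; rewrite /= !inE !negb_or.
  case/and4P => va vb vc vd; rewrite ![_ == v]eq_sym va vb vc vd.
  by case/and4P => /and3P [-> -> ->] /andP [-> ->] -> _.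
- by rewrite /= vG !Ub_notin // ?inE ?eqxx ?orbT.
- by split; apply: diag0.
Qed.

Lemma PP0 : PP set0.
Proof. by split. Qed.

Lemma PP_all (G : {set T}) : G \subset Ub -> PP G.
Proof.
suff h : forall k (G : {set T}), #|G| <= k -> G \subset Ub -> PP G by exact: h.
elim=> [|k IH] {}G.
  rewrite leqn0 cards_eq0 => /eqP -> _; exact: PP0.
move=> Gk GU; case: (set_0Vmem G) => [-> | [w wG]]; first exact: PP0.
have wU : w \in Ub := subsetP GU w wG.
pose G0 := G :\ w.
have G0U : G0 \subset Ub by apply: subset_trans GU; exact: subsetDl.
have G0k : #|G0| <= k by move: Gk; rewrite (cardsD1 w G) wG.
have P0 := IH G0 G0k G0U.
have eG : G = w |: G0 by rewrite setD1K.
have wG0 : w \notin G0 by rewrite /G0 setD11.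
have FG : Fc C G0 [:: w].
  case: (set_0Vmem G0) => [e0 | [u uG0]].
    have : [set w] \in faces C by move: wU; rewrite /Ub !inE => /andP [_ /andP [_ ->]].
    rewrite /Fc e0 setU0; suff -> : [set x in [:: w]] = [set w] by [].
    by apply/setP => x; rewrite !inE.
  pose H := G0 :\ u.
  have HU : H \subset Ub by apply: subset_trans G0U; exact: subsetDl.
  have Hk : #|H| <= k by apply: leq_trans G0k; apply: subset_leq_card; exact: subsetDl.
  have PH := IH H Hk HU.
  have uG : u \in G by move: uG0; rewrite /G0 !inE => /andP [_ ->].
  have uw : u != w by move: uG0; rewrite /G0 !inE => /andP [-> _].
  have G1U : G :\ u \subset Ub by apply: subset_trans GU; exact: subsetDl.
  have G1k : #|G :\ u| <= k by move: Gk; rewrite (cardsD1 u G) uG.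
  have P1 := IH _ G1k G1U.
  have eG0 : G0 = u |: H by rewrite setD1K.
  have eG1 : G :\ u = w |: H.
    apply/setP => x; rewrite /H /G0 !inE.
    case: (x =P w) => [->|]; first by rewrite eq_sym uw wG.
    by rewrite andbC.
  have uU : u \in Ub := subsetP G0U u uG0.
  have uH : u \notin H by rewrite /H setD11.
  have wH : w \notin H by apply: contra wG0; rewrite /H !inE => /andP [_ ->].
  case: P0 => f1 f2 f3 f4. rewrite eG0 !FcU in f1 f2 f3 f4.
  case: P1 => g1 g2 g3 g4. rewrite eG1 !FcU in g1 g2 g3 g4.
  have fu : Fc C H [:: u] by apply: (Fc_perm hC _ f1); subl.
  have Hc := mk_cfg HU uU uH PH fu.
  have wn : w \notin [:: a; b; c; d; u].
    move: (Ub_nin wU); rewrite !inE !negb_or => /and4P [-> -> -> ->]; by rewrite eq_sym uw.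
  have := stepO6 hC nP4 nO6 nJ1 nJ2 nB1 Hc wn wH g1 g2 g3 g4.
  by rewrite eG0 FcU.
have Hc := mk_cfg G0U wU wG0 P0 FG.
have Hc1 := cfg_rot hC Hc. have Hc2 := cfg_rot hC Hc1. have Hc3 := cfg_rot hC Hc2.
have t1 := stepA hC nP4 nJ1 nJ2 nB1 Hc.
have t2 := stepA hC nP4 nJ1 nJ2 nB1 Hc1.
have t3 := stepA hC nP4 nJ1 nJ2 nB1 Hc2.
have t4 := stepA hC nP4 nJ1 nJ2 nB1 Hc3.
by rewrite /PP eG !FcU.
Qed.

Lemma S_face (S : {set T}) : S \subset nonghost C ->
  (S \in faces C) = ~~ ((a \in S) && (c \in S)) && ~~ ((b \in S) && (d \in S)).
Proof.
move=> SN; apply/idP/idP.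
  move=> SC; apply/andP; split; apply/negP => /andP [h1 h2].
    move/negP: n1; apply; rewrite /Fc setU0; apply: (proj2 hC _ _ SC).
    by apply/subsetP => x; rewrite !inE => /orP [] /eqP ->.
  move/negP: n2; apply; rewrite /Fc setU0; apply: (proj2 hC _ _ SC).
  by apply/subsetP => x; rewrite !inE => /orP [] /eqP ->.
move=> hS.
pose G := S :&: Ub.
have GU : G \subset Ub by exact: subsetIr.
have [f1 f2 f3 f4] := PP_all GU.
have key : forall x y, Fc C G [:: x; y] ->
    (forall s, s \in S -> s \in [:: a; b; c; d] -> (s == x) || (s == y)) -> S \in faces C.
  move=> x y fxy hs; apply: (proj2 hC _ _ fxy); apply/subsetP => s sS.
  case sU: (s \in Ub); first by apply/setUP; right; apply/setIP.
  have sl : s \in [:: a; b; c; d].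
    move: sU; rewrite /Ub inE (subsetP SN s sS) andbT => /negbFE.
    rewrite !inE; by do ! case: (_ == _).
  by rewrite !inE (hs s sS sl).
move: hS; case aS: (a \in S); case bS: (b \in S); case cS: (c \in S); case dS: (d \in S) => //= _.
all: first [ by apply: (key _ _ f1); (move=> s sS; rewrite !inE => /or4P [] /eqP E; subst s; rewrite ?eqxx ?orbT //; by rewrite ?aS ?bS ?cS ?dS in sS) | by apply: (key _ _ f2); (move=> s sS; rewrite !inE => /or4P [] /eqP E; subst s; rewrite ?eqxx ?orbT //; by rewrite ?aS ?bS ?cS ?dS in sS) | by apply: (key _ _ f3); (move=> s sS; rewrite !inE => /or4P [] /eqP E; subst s; rewrite ?eqxx ?orbT //; by rewrite ?aS ?bS ?cS ?dS in sS) | by apply: (key _ _ f4); (move=> s sS; rewrite !inE => /or4P [] /eqP E; subst s; rewrite ?eqxx ?orbT //; by rewrite ?aS ?bS ?cS ?dS in sS) ].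
Qed.

End Main.

Lemma sl_sl n l1 l2 : (sl n l1 \subset sl n l2) = all (fun k => (k < n) ==> (k \in l2)) l1.
Proof.
apply/subsetP/allP => [h k kl|h i].
  apply/implyP => kn; have := h (Ordinal kn); rewrite !inE /=; by apply.
rewrite !inE => il; have := h _ il; by rewrite ltn_ord.
Qed.

Lemma cone_forall p (F : {set 'I_p.+4}) x y :
  [forall i in F, (val i < 4) ==> ((val i == x) || (val i == y))] =
  all (fun k => (inord k \in F) ==> ((k == x) || (k == y))) [:: 0; 1; 2; 3].
Proof.
apply/forallP/allP => [h k kl|h i].
  have k4 : k < 4 by move: kl; rewrite !inE => /or4P [] /eqP ->.
  have kp : k < p.+4 by apply: leq_trans k4 _.
  have e : val (inord k : 'I_p.+4) = k by apply: inordK.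
  apply/implyP => kF; move: (h (inord k)); by rewrite kF e k4.
apply/implyP => iF; apply/implyP => i4.
have : val i \in [:: 0; 1; 2; 3] by move: i4; rewrite !inE; case: (val i) => [|[|[|[|n]]]].
move/h; by rewrite inord_val iF.
Qed.

Lemma vxE (i j : nat) : i < 4 -> j < 4 -> ((vx i : 'I_4) == vx j) = (i == j).
Proof. move=> hi hj; by rewrite vx_eq // /vx /= inordK. Qed.

Theorem proposition4p4 (T : finType) (C : complex T) :
  is_complex C -> beta_avoiding C ->
  (exists W : {set T}, W \subset ground C /\ iso (induced C W) C4) ->
  exists p : nat, iso (induced C (nonghost C)) (cone_C4 p).
Proof.
move=> hC hb [W [WC [f [finj [fW fF]]]]].
have nP4 : forall D, is_minor D C -> ~ iso D P4 by move=> D /hb [].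
have nO6 : forall D, is_minor D C -> ~ iso D O6 by move=> D /hb [_ []].
have nJ1 : forall D, is_minor D C -> ~ iso D J1 by move=> D /hb [_ [_ [_ []]]].
have nJ2 : forall D, is_minor D C -> ~ iso D J2 by move=> D /hb [_ [_ [_ [_ [_ []]]]]].
have nB1 : forall D, is_minor D C -> ~ iso D (bdry_plus 1)
  by move=> D /hb [_ [_ [_ [_ [_ [_ h]]]]]]; exact: (h 1 isT).
have ex k : exists2 t, t \in W & f t = vx k.
  have fW' : f @: W = setT by exact: fW.
  have : (vx k : 'I_4) \in f @: W by rewrite fW' inE.
  by case/imsetP => t tW ->; exists t.
have [a aW fa] := ex 0. have [b bW fb] := ex 1. have [c cW fc] := ex 2. have [d dW fd] := ex 3.
have tr (F : {set T}) : F \subset W -> (F \in faces C) = (f @: F \in faces C4).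
  by move=> FW; rewrite -fF // inE FW andbT.
have s2 x y : x \in W -> y \in W -> Fc C set0 [:: x; y] = ([set f x; f y] \in faces C4).
  move=> xW yW; rewrite /Fc setU0 (_ : [set z in [:: x; y]] = [set x; y]); last first.
    by apply/setP => z; rewrite !inE.
  rewrite tr; first by rewrite imsetU1 imset_set1.
  by apply/subsetP => z; rewrite !inE => /orP [] /eqP ->.
have c4 i j : i < 4 -> j < 4 -> ([set vx i; vx j] \in faces C4) =
    all (fun k => (k < 4) ==> (k \in [:: 0; 1])) [:: i; j] || all (fun k => (k < 4) ==> (k \in [:: 1; 2])) [:: i; j]
    || all (fun k => (k < 4) ==> (k \in [:: 2; 3])) [:: i; j] || all (fun k => (k < 4) ==> (k \in [:: 0; 3])) [:: i; j].
  move=> hi hj; rewrite inE /= !set2_sl // !sl_sl /= orbF !orbA //.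
have e1 : Fc C set0 [:: a; b] by rewrite s2 // fa fb c4.
have e2 : Fc C set0 [:: b; c] by rewrite s2 // fb fc c4.
have e3 : Fc C set0 [:: c; d] by rewrite s2 // fc fd c4.
have e4 : Fc C set0 [:: d; a] by rewrite s2 // fd fa c4.
have n1 : ~~ Fc C set0 [:: a; c] by rewrite s2 // fa fc c4.
have n2 : ~~ Fc C set0 [:: b; d] by rewrite s2 // fb fd c4.
have ne x y i j : f x = vx i -> f y = vx j -> i < 4 -> j < 4 -> i != j -> x != y.
  move=> hx hy hi hj ij; apply/eqP => e; move: (congr1 f e); rewrite hx hy => /eqP.
  by rewrite vxE // (negbTE ij).
have abcd : uniq [:: a; b; c; d].
  rewrite /= !inE !negb_or.
  by rewrite (ne a b 0 1) ?(ne a c 0 2) ?(ne a d 0 3) ?(ne b c 1 2) ?(ne b d 1 3) ?(ne c d 2 3).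
have SF := S_face hC nP4 nO6 nJ1 nJ2 nB1 abcd e1 e2 e3 e4 n1 n2.
have ng1 : forall (z : T) l, Fc C set0 l -> z \in l -> z \in nonghost C.
  move=> x l h xl; rewrite inE (Fc_ground hC h xl) /=.
  have : Fc C set0 [:: x] by apply: (Fc_perm hC _ h) => z; rewrite inE => /eqP ->.
  rewrite /Fc setU0 (_ : [set y in [:: x]] = [set x]) //; by apply/setP => y; rewrite !inE.
have ngl : forall z, z \in [:: a; b; c; d] -> z \in nonghost C.
  move=> z zl; rewrite !inE in zl; case/or4P: zl => /eqP ->.
  - by apply: (ng1 _ _ e1); rewrite !inE eqxx.
  - by apply: (ng1 _ _ e2); rewrite !inE eqxx.
  - by apply: (ng1 _ _ e3); rewrite !inE eqxx.
  - by apply: (ng1 _ _ e4); rewrite !inE eqxx.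
pose U := Ub C a b c d.
pose p := #|U|.
pose s := [:: a; b; c; d] ++ enum U.
have us : uniq s.
  rewrite cat_uniq abcd enum_uniq andbT /=; apply/hasPn => x; rewrite mem_enum => /Ub_nin.
  by apply.
have sz : size s = p.+4 by rewrite size_cat /= -cardE.
pose g := fun i : 'I_p.+4 => nth a s i.
have ginj : injective g.
  move=> i j /eqP; rewrite /g nth_uniq ?sz // => /eqP; exact: val_inj.
have sN x : (x \in s) = (x \in nonghost C).
  rewrite mem_cat mem_enum; case xl: (x \in [:: a; b; c; d]); first by rewrite (ngl x xl).
  rewrite /= /U /Ub inE; suff -> : (x \in [set a; b; c; d]) = false by [].
  by move: xl; rewrite !inE; do ! case: (_ == _).
have gs : g @: setT = nonghost C.
  apply/setP => x; rewrite -sN; apply/imsetP/idP => [[i _ ->]|xs].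
    by rewrite /g mem_nth ?sz.
  have xn : index x s < p.+4 by rewrite -sz index_mem.
  by exists (Ordinal xn); rewrite // /g nth_index.
have gk k : k < 4 -> g (inord k) = nth a [:: a; b; c; d] k.
  move=> k4; rewrite /g /= inordK; last by apply: leq_trans k4 _.
  by rewrite nth_cat /= k4.
exists p; apply: (iso_inv ord0 _ ginj) => //.
move=> F; rewrite inE /=.
have -> : g @: F \subset nonghost C by rewrite -gs; apply: imsetS; exact: subsetT.
rewrite andbT SF; last by rewrite -gs; apply: imsetS; exact: subsetT.
have ma := mem_imset F (inord 0) ginj. rewrite gk // in ma.
have mb := mem_imset F (inord 1) ginj. rewrite gk // in mb.
have mc := mem_imset F (inord 2) ginj. rewrite gk // in mc.
have md := mem_imset F (inord 3) ginj. rewrite gk // in md.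
rewrite /= in ma mb mc md.
rewrite ma mb mc md inE /= !cone_forall /=.
by case: (inord 0 \in F); case: (inord 1 \in F); case: (inord 2 \in F); case: (inord 3 \in F).
Qed.
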